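(* Let $\mathcal{H}_R\cong\mathcal{H}_A$ be $d$-dimensional Hilbert spaces with computational bases $\{|i\rangle\}_{i=1}^d$, let $\Lambda\colon\mathcal{B}(\mathcal{H}_A)\to\mathcal{B}(\mathcal{H}_B)$ be a completely positive map, and let $\Phi_{RA}$ be the projector onto $|\Phi\rangle_{RA}=\frac{1}{\sqrt d}\sum_{i=1}^d|i\rangle_R\otimes|i\rangle_A$. Fix a unitary $U$ on $\mathcal{H}_R$, and let $\sigma_{RB}$ be a state satisfying $(\Gamma_{Z_U}\otimes\mathrm{id}_B)(\sigma_{RB})=\sigma_{RB}$. Then \[ \exp D_2\big((\mathcal{T}_U\otimes \Lambda)(\Phi_{RA})\,\big\|\, \sigma_{RB}\big) \geq \frac{1}{d}\exp D_2\big( (\mathrm{id}_R\otimes \Lambda)(\Phi_{RA})\,\big\|\, \sigma_{RB}\big). \]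
   Context: For a unitary $U$ on a $d$-dimensional space with computational basis $\{|i\rangle\}$, set $|u_i\rangle=U|i\rangle$. The dephasing map is $\mathcal{T}_U(\rho)=\sum_{i=1}^d |u_i\rangle\langle u_i|\rho|u_i\rangle\langle u_i|$, and $Z_U$ is the unitary with $Z_U|u_j\rangle=e^{2\pi i j/d}|u_j\rangle$. For an operator $X$, $\Gamma_X(\rho)=X\rho X^\dagger$. For positive semidefinite $\rho$ and $\sigma$, $\exp D_2(\rho\|\sigma)=\operatorname{tr}(\sigma^{-1/2}\rho\,\sigma^{-1/2}\rho)$ (the collision relative entropy exponentiated), with the inverse taken on the support of $\sigma$. *)

(* Defs.v *)
From HB Require Import structures.
From mathcomp Require Import all_boot all_order all_algebra.
From mathcomp Require Import complex mxtens.
From mathcomp Require Import reals trigo.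

Set Implicit Arguments.
Unset Strict Implicit.
Unset Printing Implicit Defensive.

Import Order.TTheory GRing.Theory Num.Theory.
Local Open Scope ring_scope.

(* A bipartite operator on C^m (x) C^n is a matrix 'M[C]_(m * n),      *)
(* indexed through mxtens_index (i, j) <-> |i> (x) |j> ; tensmx is the *)
(* Kronecker product A (x) B.                                          *)

Section QI.
Variable C : numClosedFieldType.

Definition adjmx m n (M : 'M[C]_(m, n)) : 'M[C]_(n, m) := (map_mx Num.conj M)^T.

Definition psdmx n (A : 'M[C]_n) : Prop :=
  adjmx A = A /\ forall v : 'rV[C]_n, 0 <= (v *m A *m adjmx v) 0 0.

Definition statemx n (A : 'M[C]_n) : Prop := psdmx A /\ \tr A = 1.

Definition unitary n (U : 'M[C]_n) : Prop := U *m adjmx U = 1%:M.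

(* (i,j) block of X on the first factor: the operator on the second
   factor given by <i| X |j> (partial matrix element). *)
Definition blockmx n d (X : 'M[C]_(n * d)) (i j : 'I_n) : 'M[C]_d :=
  \matrix_(a, b) X (mxtens_index (i, a)) (mxtens_index (j, b)).

Definition id_tens n d e (L : 'M[C]_d -> 'M[C]_e) (X : 'M[C]_(n * d))
  : 'M[C]_(n * e) :=
  \matrix_(p, q) L (blockmx X (mxtens_unindex p).1 (mxtens_unindex q).1)
                   (mxtens_unindex p).2 (mxtens_unindex q).2.

Definition completely_positive d e (L : 'M[C]_d -> 'M[C]_e) : Prop :=
  forall n (X : 'M[C]_(n * d)), psdmx X -> psdmx (@id_tens n d e L X).

Definition max_ent_vec d : 'cV[C]_(d * d) :=
  \col_k (if (mxtens_unindex k).1 == (mxtens_unindex k).2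
          then (sqrtC (d%:R))^-1 else 0).
Definition max_ent d : 'M[C]_(d * d) := max_ent_vec d *m adjmx (max_ent_vec d).

Definition ubasis d (U : 'M[C]_d) (i : 'I_d) : 'cV[C]_d := U *m delta_mx i 0.
Definition uproj d (U : 'M[C]_d) (i : 'I_d) : 'M[C]_d :=
  ubasis U i *m adjmx (ubasis U i).

Definition dephase d (U : 'M[C]_d) (rho : 'M[C]_d) : 'M[C]_d :=
  \sum_i uproj U i *m rho *m uproj U i.

Definition dephase_tens_id d e (U : 'M[C]_d) (Y : 'M[C]_(d * e)) : 'M[C]_(d * e) :=
  \sum_i (tensmx (uproj U i) (1%:M : 'M[C]_e)) *m Y *m (tensmx (uproj U i) (1%:M : 'M[C]_e)).

(* Z_U with Z_U |u_j> = w^j |u_j>, j = 1..d (w given) *)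
Definition ZU d (w : C) (U : 'M[C]_d) : 'M[C]_d :=
  \sum_(j < d) w ^+ j.+1 *: uproj U j.

Definition Gamma_tens_id d e (X : 'M[C]_d) (Y : 'M[C]_(d * e)) : 'M[C]_(d * e) :=
  (tensmx X (1%:M : 'M[C]_e)) *m Y *m adjmx (tensmx X (1%:M : 'M[C]_e)).

(* sigma^{-1/2}, inverse taken on the support, via the spectral
   decomposition sigma = P^-1 diag(D) P with P unitary (so P^-1 is the adjoint of P). *)
Definition inv_sqrt_supp n (s : 'M[C]_n) : 'M[C]_n :=
  let P := spectralmx s in
  let D := spectral_diag s in
  adjmx P *m diag_mx (\row_i (if 0 < D 0 i then (sqrtC (D 0 i))^-1 else 0)) *m P.

(* exp D_2(rho || sigma) = tr(sigma^{-1/2} rho sigma^{-1/2} rho) *)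
Definition expD2 n (rho sigma : 'M[C]_n) : C :=
  let S := inv_sqrt_supp sigma in \tr (S *m rho *m S *m rho).

End QI.

Arguments id_tens {C} n {d e} L X.
Arguments dephase_tens_id {C d} e U Y.
Arguments Gamma_tens_id {C d} e X Y.
Arguments max_ent C d.

Definition omega (R : realType) (d : nat) : R[i] :=
  ((cos (2 * pi / d%:R)) +i* (sin (2 * pi / d%:R)))%C.

(* Main.v *)
Require Import Defs.
From HB Require Import structures.
From mathcomp Require Import all_boot all_order all_algebra.
From mathcomp Require Import complex mxtens.
From mathcomp Require Import reals trigo.
From mathcomp Require Import ring lra.
Import GRing.Theory Num.Theory.
Local Open Scope ring_scope.

Lemma lem4 (V : zmodType) (a b c e : V) : a - b - (c - e) = a + e - (c + b).
Proof. by rewrite opprB opprD addrACA [- c - b]addrC. Qed.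

Section Gen.
Variable C : numClosedFieldType.

Lemma adjmxE m n (A : 'M[C]_(m, n)) i j : adjmx A i j = (A j i)^*.
Proof. by rewrite /adjmx !mxE. Qed.

Lemma adjmxK m n (A : 'M[C]_(m, n)) : adjmx (adjmx A) = A.
Proof. by apply/matrixP => i j; rewrite !adjmxE conjCK. Qed.

Lemma adjmxM m n p (A : 'M[C]_(m, n)) (B : 'M[C]_(n, p)) :
  adjmx (A *m B) = adjmx B *m adjmx A.
Proof. by rewrite /adjmx map_mxM trmx_mul. Qed.

Lemma adjmxD m n (A B : 'M[C]_(m, n)) : adjmx (A + B) = adjmx A + adjmx B.
Proof. by apply/matrixP => i j; rewrite !mxE rmorphD. Qed.

Lemma adjmxN m n (A : 'M[C]_(m, n)) : adjmx (- A) = - adjmx A.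
Proof. by apply/matrixP => i j; rewrite !mxE rmorphN. Qed.

Lemma adjmxB m n (A B : 'M[C]_(m, n)) : adjmx (A - B) = adjmx A - adjmx B.
Proof. by rewrite adjmxD adjmxN. Qed.

Lemma adjmxZ m n c (A : 'M[C]_(m, n)) : adjmx (c *: A) = c^* *: adjmx A.
Proof. by apply/matrixP => i j; rewrite !mxE rmorphM. Qed.

Lemma adjmx_sum m n I (r : seq I) (P : pred I) (F : I -> 'M[C]_(m, n)) :
  adjmx (\sum_(i <- r | P i) F i) = \sum_(i <- r | P i) adjmx (F i).
Proof.
elim/big_rec2: _ => [|i x y _ <-]; last by rewrite adjmxD.
by apply/matrixP => i j; rewrite !mxE rmorph0.
Qed.

Lemma adjmx1 n : adjmx (1%:M : 'M[C]_n) = 1%:M.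
Proof. by rewrite /adjmx map_mx1 trmx1. Qed.

Lemma adjmx_tens m n p q (A : 'M[C]_(m, n)) (B : 'M[C]_(p, q)) :
  adjmx (A *t B) = adjmx A *t adjmx B.
Proof. by rewrite /adjmx map_mxT trmx_tens. Qed.

Lemma adjmx_diag n (D : 'rV[C]_n) : adjmx (diag_mx D) = diag_mx (map_mx Num.conj D).
Proof.
apply/matrixP => i j; rewrite !mxE; case: eqP => [->|/eqP ne].
  by rewrite eqxx !mulr1n.
by rewrite eq_sym (negbTE ne) !mulr0n rmorph0.
Qed.

Lemma adjmx_ts n (A : 'M[C]_n) : adjmx A = (A ^t* )%sesqui.
Proof. by rewrite /adjmx map_trmx. Qed.


Lemma psd_herm {n} {A : 'M[C]_n} : psdmx A -> adjmx A = A.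
Proof. by case. Qed.

Lemma psd_congr {m n} (X : 'M[C]_(m, n)) {A : 'M[C]_n} :
  psdmx A -> psdmx (X *m A *m adjmx X).
Proof.
move=> [hA pA]; split.
  by rewrite !adjmxM adjmxK hA mulmxA.
move=> v; have := pA (v *m X).
by rewrite adjmxM !mulmxA.
Qed.

Lemma psd_diag_ge0 {n} {A : 'M[C]_n} i : psdmx A -> 0 <= A i i.
Proof.
move=> [_ pA]; have := pA (delta_mx 0 i).
have -> : adjmx (delta_mx (0 : 'I_1) i) = delta_mx i 0 :> 'M[C]_(n, 1).
  apply/matrixP => a b; rewrite adjmxE !mxE; case: (a == i); case: (b == 0) => /=;
  by rewrite ?rmorph1 ?rmorph0.
by rewrite -rowE -colE !mxE.
Qed.

Lemma herm_normal {n} {A : 'M[C]_n} : adjmx A = A -> A \is normalmx.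
Proof. by move=> hA; apply/normalmxP; rewrite -adjmx_ts hA. Qed.

Lemma unitary_adj {n} {P : 'M[C]_n} : P \is unitarymx ->
  P *m adjmx P = 1%:M /\ adjmx P *m P = 1%:M.
Proof.
move=> /unitarymxP; rewrite -adjmx_ts => h; split => //.
exact: mulmx1C.
Qed.

Lemma spectral_decomp {n} {A : 'M[C]_n} : adjmx A = A ->
  A = adjmx (spectralmx A) *m diag_mx (spectral_diag A) *m spectralmx A.
Proof.
move=> hA; have /orthomx_spectralP {1}-> := herm_normal hA.
by rewrite invmx_unitary ?spectral_unitarymx // -adjmx_ts.
Qed.

Lemma tr_psd_ge0 {n} {A B : 'M[C]_n} : psdmx A -> psdmx B -> 0 <= \tr (A *m B).
Proof.
move=> pA pB.
set P := spectralmx A; set D := spectral_diag A.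
have [PP1 P1P] := unitary_adj (spectral_unitarymx A).
have eA := spectral_decomp (psd_herm pA).
have eD : diag_mx D = P *m A *m adjmx P.
  by rewrite [in RHS]eA !mulmxA PP1 mul1mx -!mulmxA PP1 mulmx1.
rewrite eA -!mulmxA mxtrace_mulC -!mulmxA.
have -> : \tr (diag_mx D *m (P *m (B *m adjmx P))) =
          \sum_k D 0 k * (P *m B *m adjmx P) k k.
  by rewrite /mxtrace; apply: eq_bigr => k _; rewrite mul_diag_mx mxE mulmxA.
apply: sumr_ge0 => k _; apply: mulr_ge0; last exact/psd_diag_ge0/psd_congr.
have -> : D 0 k = diag_mx D k k by rewrite mxE eqxx mulr1n.
by rewrite eD; apply/psd_diag_ge0/psd_congr.
Qed.


Lemma comm_fun {n} {A : 'M[C]_n} (X : 'M[C]_n) (g : C -> C) :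
  adjmx A = A -> X *m A = A *m X ->
  X *m (adjmx (spectralmx A) *m diag_mx (\row_i g (spectral_diag A 0 i)) *m spectralmx A)
  = (adjmx (spectralmx A) *m diag_mx (\row_i g (spectral_diag A 0 i)) *m spectralmx A) *m X.
Proof.
move=> hA cXA.
set P := spectralmx A; set D := spectral_diag A.
have [PP1 P1P] := unitary_adj (spectral_unitarymx A).
have eA := spectral_decomp hA.
have eD : diag_mx D = P *m A *m adjmx P.
  by rewrite [in RHS]eA !mulmxA PP1 mul1mx -!mulmxA PP1 mulmx1.
set Q := P *m X *m adjmx P.
have cQ : Q *m diag_mx D = diag_mx D *m Q.
  rewrite eD /Q !mulmxA -[P *m X *m adjmx P *m P]mulmxA P1P mulmx1.
  rewrite -[P *m X *m A]mulmxA cXA !mulmxA -[P *m A *m adjmx P *m P]mulmxA P1P.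
  by rewrite mulmx1.
have eX : X = adjmx P *m Q *m P.
  by rewrite /Q !mulmxA P1P mul1mx -mulmxA P1P mulmx1.
clearbody Q.
set G := \row_i g (D 0 i).
have GE l : G 0 l = g (D 0 l) by rewrite mxE.
clearbody G.
have cG : Q *m diag_mx G = diag_mx G *m Q.
  apply/matrixP => k l; have /matrixP /(_ k l) e := cQ.
  rewrite mul_mx_diag mul_diag_mx !mxE in e.
  rewrite mul_mx_diag mul_diag_mx !mxE !GE.
  have [->|nz] := eqVneq (Q k l) 0; first by rewrite mulr0 mul0r.
  have : Q k l * (D 0 l - D 0 k) = 0 by rewrite mulrBr e mulrC subrr.
  by move/eqP; rewrite mulf_eq0 (negbTE nz) subr_eq0 /= => /eqP ->; rewrite mulrC.
rewrite eX !mulmxA -[adjmx P *m Q *m P *m adjmx P]mulmxA PP1 mulmx1.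
rewrite -[adjmx P *m diag_mx G *m P *m adjmx P]mulmxA PP1 mulmx1.
by rewrite -[adjmx P *m Q *m _]mulmxA cG mulmxA.
Qed.


Lemma tr_sum n I (r : seq I) (P : pred I) (F : I -> 'M[C]_n) :
  \tr (\sum_(i <- r | P i) F i) = \sum_(i <- r | P i) \tr (F i).
Proof. exact: linear_sum. Qed.

Lemma mulmxMnr m n p (A : 'M[C]_(m, n)) (B : 'M[C]_(n, p)) k :
  A *m (B *+ k) = (A *m B) *+ k.
Proof. by elim: k => [|k IH]; rewrite ?mulr0n ?mulmx0 // !mulrS mulmxDr IH. Qed.

Lemma trMn n (A : 'M[C]_n) k : \tr (A *+ k) = \tr A *+ k.
Proof. by elim: k => [|k IH]; rewrite ?mulr0n ?mxtrace0 // !mulrS mxtraceD IH. Qed.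

Lemma trB n (A B : 'M[C]_n) : \tr (A - B) = \tr A - \tr B.
Proof. exact: linearB. Qed.

Section Proj.
Variables (N d : nat) (Pi : 'I_d -> 'M[C]_N).
Hypothesis HPP : forall i j, Pi i *m Pi j = if i == j then Pi i else 0.
Hypothesis HPsum : \sum_i Pi i = 1%:M.
Hypothesis HPadj : forall i, adjmx (Pi i) = Pi i.

Lemma sum_sel (F : 'I_d -> 'M[C]_N) i :
  \sum_j (if i == j then F j else 0) = F i.
Proof.
rewrite (bigD1 i) //= eqxx big1 ?addr0 // => j /negbTE.
by rewrite eq_sym => ->.
Qed.

Lemma comm_from_Z (c : 'I_d -> C) (sigma : 'M[C]_N) :
  (forall i j, i != j -> c i * (c j)^* != 1) ->
  (\sum_j c j *: Pi j) *m sigma *m adjmx (\sum_j c j *: Pi j) = sigma ->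
  forall i, Pi i *m sigma = sigma *m Pi i.
Proof.
move=> hc hZ.
have PiZ i : Pi i *m (\sum_j c j *: Pi j) = c i *: Pi i.
  rewrite mulmx_sumr -[RHS](sum_sel (fun j => c j *: Pi j)).
  by apply: eq_bigr => j _; rewrite -scalemxAr HPP; case: eqP => [->|_]; rewrite ?scaler0.
have ZPi j : adjmx (\sum_j c j *: Pi j) *m Pi j = (c j)^* *: Pi j.
  rewrite adjmx_sum mulmx_suml -[RHS](sum_sel (fun i => (c i)^* *: Pi i)).
  apply: eq_bigr => i _; rewrite adjmxZ HPadj -scalemxAl HPP [j == i]eq_sym.
  by case: eqP => [->|_]; rewrite ?scaler0.
have off i j : i != j -> Pi i *m sigma *m Pi j = 0.
  move=> ij; have e : Pi i *m sigma *m Pi j = (c i * (c j)^*) *: (Pi i *m sigma *m Pi j).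
    rewrite -{1}hZ !mulmxA PiZ -!mulmxA ZPi -scalemxAl -!scalemxAr scalerA.
    by rewrite mulrC !mulmxA.
  have : (1 - c i * (c j)^*) *: (Pi i *m sigma *m Pi j) = 0.
    by rewrite scalerBl scale1r -e subrr.
  by move/eqP; rewrite scaler_eq0 subr_eq0 eq_sym (negbTE (hc _ _ ij)) /= => /eqP.
move=> i.
have -> : Pi i *m sigma = Pi i *m sigma *m Pi i.
  rewrite -{1}[Pi i *m sigma]mulmx1 -HPsum mulmx_sumr (bigD1 i) //= big1 ?addr0 //.
  by move=> j ji; apply: off; rewrite eq_sym.
symmetry; rewrite -{1}[sigma]mul1mx -HPsum mulmx_suml mulmx_suml (bigD1 i) //= big1 ?addr0 //.
by move=> j ji; apply: off.
Qed.

Lemma core (S rho : 'M[C]_N) : (0 < d)%N -> adjmx S = S ->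
  (forall i, S *m Pi i = Pi i *m S) -> psdmx rho ->
  (d%:R)^-1 * \tr (S *m rho *m S *m rho) <=
  \tr (S *m (\sum_i Pi i *m rho *m Pi i) *m S *m (\sum_i Pi i *m rho *m Pi i)).
Proof.
move=> d_gt0 hS cS prho.
pose T X := \sum_i Pi i *m X *m Pi i.
have fE X Y : \tr (S *m T X *m S *m Y) = \tr (S *m X *m S *m T Y).
  rewrite /T mulmx_sumr !mulmx_suml tr_sum mulmx_sumr tr_sum.
  apply: eq_bigr => i _.
  rewrite !mulmxA cS -!mulmxA [Pi i *m (S *m Y)]mulmxA -cS.
  by rewrite mxtrace_mulC !mulmxA.
have TT X : T (T X) = T X.
  apply: eq_bigr => i _; rewrite mulmx_sumr mulmx_suml.
  rewrite -[RHS](sum_sel (fun j => Pi j *m X *m Pi j) i).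
  apply: eq_bigr => j _; rewrite !mulmxA HPP.
  case: eqP => [<-|_]; last by rewrite !mul0mx.
  by rewrite -mulmxA HPP eqxx.
rewrite -/(T rho) fE TT.
set a := \tr (S *m rho *m S *m T rho).
set b := \tr (S *m rho *m S *m rho).
pose X i j := Pi i - Pi j.
have eD : \sum_i \sum_j X i j *m rho *m adjmx (X i j) = (T rho *+ d + T rho *+ d) - (rho + rho).
  have e1 i j : X i j *m rho *m adjmx (X i j) =
     Pi i *m rho *m Pi i + Pi j *m rho *m Pi j - (Pi i *m rho *m Pi j + Pi j *m rho *m Pi i).
    by rewrite /X adjmxB !HPadj !(mulmxBl, mulmxBr) lem4.
  under eq_bigr => i _ do under eq_bigr => j _ do rewrite e1.
  under eq_bigr => i _ do rewrite sumrB !big_split /=.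
  rewrite sumrB !big_split /=.
  have s1 : \sum_i \sum_(j < d) Pi i *m rho *m Pi i = T rho *+ d.
    by rewrite /T -sumrMnl; apply: eq_bigr => i _; rewrite sumr_const card_ord.
  have s2 : \sum_(i < d) \sum_j Pi j *m rho *m Pi j = T rho *+ d.
    by rewrite sumr_const card_ord.
  have s3 : \sum_i \sum_j Pi i *m rho *m Pi j = rho.
    under eq_bigr => i _ do rewrite -mulmx_sumr HPsum mulmx1.
    by rewrite -mulmx_suml HPsum mul1mx.
  have s4 : \sum_i \sum_j Pi j *m rho *m Pi i = rho.
    under eq_bigr => i _ do rewrite -mulmx_suml -mulmx_suml HPsum mul1mx.
    by rewrite -mulmx_sumr HPsum mulmx1.
  by rewrite s1 s2 s3 s4.
have pos : 0 <= \tr (S *m rho *m S *m \sum_i \sum_j X i j *m rho *m adjmx (X i j)).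
  rewrite mulmx_sumr tr_sum; apply: sumr_ge0 => i _.
  rewrite mulmx_sumr tr_sum; apply: sumr_ge0 => j _.
  apply: tr_psd_ge0; last exact: psd_congr.
  by rewrite -{2}hS; apply: psd_congr.
rewrite eD mulmxBr !mulmxDr !mulmxMnr trB !mxtraceD !trMn -/a -/b in pos.
have h : b <= a * d%:R.
  have e : a *+ d + a *+ d - (b + b) = (a * d%:R - b) *+ 2.
    by rewrite mulr2n opprD addrACA mulr_natr.
  by rewrite e pmulrn_lge0 // subr_ge0 in pos.
by rewrite mulrC ler_pdivrMr // ltr0n.
Qed.

End Proj.

Lemma adj_delta n (i : 'I_n) : adjmx (delta_mx i 0 : 'cV[C]_n) = delta_mx 0 i.
Proof.
apply/matrixP => a b; rewrite adjmxE !mxE; case: (a == 0); case: (b == i) => /=;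
by rewrite ?rmorph1 ?rmorph0.
Qed.

Lemma delta11 : (delta_mx 0 0 : 'M[C]_1) = 1%:M.
Proof. by apply/matrixP => a b; rewrite !mxE !ord1 eqxx. Qed.

Lemma tens_sum_scale m n p q I (r : seq I) (c : I -> C) (A : I -> 'M[C]_(m, n))
  (B : 'M[C]_(p, q)) :
  (\sum_(j <- r) c j *: A j) *t B = \sum_(j <- r) c j *: (A j *t B).
Proof.
apply/matrixP => k l; rewrite !mxE !summxE mulr_suml.
by apply: eq_bigr => j _; rewrite !mxE mulrA.
Qed.

Lemma tens11 m n : (1%:M : 'M[C]_m) *t (1%:M : 'M[C]_n) = 1%:M.
Proof.
apply/matrixP => k l.
case: (mxtens_indexP k) => i0 i1; case: (mxtens_indexP l) => j0 j1.
rewrite tensmxE !mxE (inj_eq (can_inj (@mxtens_indexK _ _))) xpair_eqE.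
by rewrite -natrM mulnb.
Qed.

Section Conc.
Variables (d dB : nat) (U : 'M[C]_d).
Hypothesis hU : unitary U.

Lemma uprojM i j : uproj U i *m uproj U j = if i == j then uproj U i else 0.
Proof.
have UU : adjmx U *m U = 1%:M by apply: mulmx1C.
have mid : adjmx (ubasis U i) *m ubasis U j = (1%:M : 'M[C]_1) *+ (i == j).
  by rewrite /ubasis adjmxM -mulmxA [adjmx U *m _]mulmxA UU mul1mx adj_delta
    mul_delta_mx_cond delta11.
rewrite /uproj mulmxA -[ubasis U i *m _ *m ubasis U j]mulmxA mid.
by case: eqP => [->|_]; rewrite ?mulr1n ?mulr0n ?mulmx1 ?mulmx0 ?mul0mx.
Qed.

Lemma uproj_sum : \sum_i uproj U i = 1%:M.
Proof.
have e i : uproj U i = U *m delta_mx i i *m adjmx U.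
  by rewrite /uproj /ubasis adjmxM adj_delta !mulmxA -[U *m _ *m _]mulmxA mul_delta_mx.
under eq_bigr => i _ do rewrite e.
by rewrite -mulmx_suml -mulmx_sumr -mx1_sum_delta mulmx1.
Qed.

Lemma uproj_adj i : adjmx (uproj U i) = uproj U i.
Proof. by rewrite /uproj adjmxM adjmxK. Qed.

Definition PiT i : 'M[C]_(d * dB) := uproj U i *t (1%:M : 'M[C]_dB).

Lemma PiTM i j : PiT i *m PiT j = if i == j then PiT i else 0.
Proof.
rewrite /PiT tensmx_mul mulmx1 uprojM.
by case: eqP => _ //; rewrite tens0mx.
Qed.

Lemma PiT_sum : \sum_i PiT i = 1%:M.
Proof.
have -> : \sum_i PiT i = (\sum_i uproj U i) *t (1%:M : 'M[C]_dB).
  apply/matrixP => k l; rewrite !mxE !summxE mulr_suml.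
  by apply: eq_bigr => j _; rewrite !mxE.
by rewrite uproj_sum tens11.
Qed.

Lemma PiT_adj i : adjmx (PiT i) = PiT i.
Proof. by rewrite /PiT adjmx_tens uproj_adj adjmx1. Qed.

Lemma ZU_tens (w : C) : ZU w U *t (1%:M : 'M[C]_dB) = \sum_(j < d) w ^+ j.+1 *: PiT j.
Proof. by rewrite /ZU tens_sum_scale. Qed.

End Conc.
Lemma psd_rank1 m (v : 'M[C]_(m, 1)) : psdmx (v *m adjmx v).
Proof.
have p1 : psdmx (1%:M : 'M[C]_1).
  split; first exact: adjmx1.
  move=> x; rewrite mulmx1 !mxE big_ord1 adjmxE.
  exact: mul_conjC_ge0.
by have := psd_congr v p1; rewrite mulmx1.
Qed.

Lemma inv_sqrt_herm n (s : 'M[C]_n) : adjmx (inv_sqrt_supp s) = inv_sqrt_supp s.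
Proof.
rewrite /inv_sqrt_supp !adjmxM adjmxK adjmx_diag mulmxA.
congr (_ *m diag_mx _ *m _); apply/matrixP => a b; rewrite !mxE.
case: ifP => h; last by rewrite rmorph0.
by apply: conj_Creal; apply: gtr0_real; rewrite invr_gt0 sqrtC_gt0.
Qed.

End Gen.

Section Trig.
Variable R : realType.
Definition ee (x : R) : R[i] := ((cos x) +i* (sin x))%C.
Lemma eeC x : (ee x)^* = ee (- x).
Proof. rewrite /ee cosN sinN. reflexivity. Qed.
Lemma eeM x y : ee x * ee y = ee (x + y).
Proof. rewrite /ee cosD sinD. rewrite [sin x * cos y + _]addrC. reflexivity. Qed.
Lemma eeX x n : ee x ^+ n = ee (x *+ n).
Proof.
elim: n => [|n IH]; first by rewrite expr0 mulr0n /ee cos0 sin0.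
by rewrite exprS IH eeM mulrS.
Qed.

Lemma cos_ne1 (d k : nat) : (0 < k)%N -> (k < d)%N ->
  cos ((2 * pi / d%:R) *+ k) != 1 :> R.
Proof.
move=> k0 kd.
have d0 : (0 < d)%N by apply: leq_ltn_trans kd.
pose y : R := pi * k%:R / d%:R.
have -> : (2 * pi / d%:R) *+ k = y *+ 2.
  by rewrite /y -[_ *+ k]mulr_natr -[_ *+ 2]mulr_natr; ring.
have ypos : 0 < y < pi.
  apply/andP; split.
    by rewrite /y mulr_gt0 ?invr_gt0 ?ltr0n // mulr_gt0 ?pi_gt0 ?ltr0n.
  by rewrite /y -mulrA gtr_pMr ?pi_gt0 // ltr_pdivrMr ?ltr0n // mul1r ltr_nat.
have sy := sin_gt0_pi ypos.
apply/negP => /eqP h.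
rewrite cos_mulr2n in h.
have c1 : cos y ^+ 2 = 1.
  move: h; set c := cos y ^+ 2; rewrite mulr2n => h; lra.
have : sin y ^+ 2 = 0 by rewrite sin2cos2 c1 subrr.
by move/eqP; rewrite sqrf_eq0 (negbTE (lt0r_neq0 sy)).
Qed.

Lemma mulrn_subA (t : R) a b : (a <= b)%N -> t *+ a - t *+ b = - (t *+ (b - a)).
Proof. by move=> ab; rewrite -{1}(subnK ab) mulrnDr opprD addrCA subrr addr0. Qed.
Lemma mulrn_subB (t : R) a b : (a <= b)%N -> t *+ b - t *+ a = t *+ (b - a).
Proof. by move=> ab; rewrite -{1}(subnK ab) mulrnDr addrK. Qed.

Lemma omega_sep (d : nat) (i j : 'I_d) : i != j ->
  (omega R d) ^+ i.+1 * ((omega R d) ^+ j.+1)^* != 1.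
Proof.
move=> ij; pose t : R := 2 * pi / d%:R.
have -> : omega R d = ee t by [].
rewrite !eeX eeC eeM.
have key : cos (t *+ i.+1 + - (t *+ j.+1)) != 1.
  have [lt|lt|eq] := ltngtP i j; last by rewrite (val_inj eq) eqxx in ij.
    have -> : t *+ i.+1 + - (t *+ j.+1) = - (t *+ (j - i)).
      by rewrite mulrn_subA ?subSS // ltnW.
    by rewrite cosN cos_ne1 ?subn_gt0 // (leq_ltn_trans (leq_subr _ _)).
  have -> : t *+ i.+1 + - (t *+ j.+1) = t *+ (i - j).
    by rewrite mulrn_subB ?subSS // ltnW.
  by rewrite cos_ne1 ?subn_gt0 // (leq_ltn_trans (leq_subr _ _)).
apply: contra key => /eqP h.
by have := congr1 (@complex.Re R) h => /= ->.
Qed.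
End Trig.

Theorem lemma3p5 (R : realType) (d dB : nat) (d_gt0 : (0 < d)%N)
  (L : {linear 'M[R[i]]_d -> 'M[R[i]]_dB})
  (L_cp : completely_positive L)
  (U : 'M[R[i]]_d) (U_unitary : unitary U)
  (sigma : 'M[R[i]]_(d * dB)) (sigma_state : statemx sigma)
  (sigma_inv : Gamma_tens_id dB (ZU (omega R d) U) sigma = sigma) :
  expD2 (dephase_tens_id dB U (id_tens d L (max_ent R[i] d))) sigma
  >= (d%:R)^-1 * expD2 (id_tens d L (max_ent R[i] d)) sigma.
Proof.
set rho := id_tens d L (max_ent R[i] d).
have prho : psdmx rho by apply: L_cp; apply: psd_rank1.
have hs : adjmx sigma = sigma by case: sigma_state => [[]].
have HPP := @PiTM _ d dB U U_unitary.
have HPs := @PiT_sum _ d dB U U_unitary.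
have HPa := @PiT_adj _ d dB U.
have cPs : forall i, PiT _ d dB U i *m sigma = sigma *m PiT _ d dB U i.
  apply: (@comm_from_Z _ _ _ _ HPP HPs HPa (fun j => omega R d ^+ j.+1) sigma).
    by move=> i j; apply: omega_sep.
  by rewrite -ZU_tens.
have cS i : inv_sqrt_supp sigma *m PiT _ d dB U i = PiT _ d dB U i *m inv_sqrt_supp sigma.
  symmetry.
  exact: (@comm_fun _ _ _ (PiT _ d dB U i) (fun x => if 0 < x then (sqrtC x)^-1 else 0) hs (cPs i)).
have H := (@core _ _ _ _ HPP HPs HPa _ _ d_gt0 (inv_sqrt_herm _ _ sigma) cS prho).
by rewrite /expD2 /dephase_tens_id /=; move: H; rewrite /PiT.
Qed.
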